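(* For every $k\ge 1$, the bi-hypergraph obtained from $\mathcal H_{2k}$ by adding a new vertex $v$ and the edges $\{v,v_{1,j},v_{2k,j+1}\}$ for all $j\in[3]$ is minimal uncolorable.
   Context: A bi-hypergraph $\mathcal H=(V,E)$ consists of a finite vertex set $V$ and a set $E$ of subsets of $V$, called edges, with no edge contained in another. A mapping $f:V\to\mathbb N$ is a proper coloring of $\mathcal H$ if $1<|f(e)|<|e|$ for every $e\in E$, where $f(e)=\{f(v):v\in e\}$. $\mathcal H$ is colorable if it has a proper coloring, and uncolorable otherwise. A subhypergraph of $\mathcal H$ is a bi-hypergraph $(V',E')$ with $V'\subseteq V$, $E'\subseteq E$; $\mathcal H$ is minimal uncolorable if it is uncolorable but every proper subhypergraph of it is colorable. For $k\ge 2$, $\mathcal H_k$ is the $3$-uniform bi-hypergraph with vertex set $\{v_{i,j}: i\in[k], j\in[3]\}$ (all distinct), with the convention $v_{i,4}=v_{i,1}$, $v_{i,5}=v_{i,2}$, whose edges are the sets $\{v_{i,1},v_{i,2},v_{i,3}\}$ for all $i\in[k]$ and the sets $\{v_{q+1,j},v_{q,j},v_{q,j+t}\}$ for all $q\in[k-1]$, $j\in[3]$, $t\in\{1,2\}$. *)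

(* Defs.v *)
From mathcomp Require Import all_boot.
Set Implicit Arguments. Unset Strict Implicit. Unset Printing Implicit Defensive.

Section BiHypergraph.
Variable T : finType.

Definition ncolors (f : T -> nat) (e : {set T}) : nat :=
  size (undup [seq f x | x <- enum e]).

Definition bihypergraph (Vs : {set T}) (Es : {set {set T}}) : Prop :=
  (forall e, e \in Es -> e \subset Vs) /\
  (forall e1 e2, e1 \in Es -> e2 \in Es -> e1 \subset e2 -> e1 = e2).

Definition proper_coloring (Es : {set {set T}}) (f : T -> nat) : Prop :=
  forall e, e \in Es -> 1 < ncolors f e < #|e|.

(* a coloring of (Vs,Es) is a map Vs -> nat; we use maps T -> nat, whose
   values outside Vs are irrelevant *)
Definition colorable (Vs : {set T}) (Es : {set {set T}}) : Prop :=
  exists f : T -> nat, proper_coloring Es f.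

Definition minimal_uncolorable (Vs : {set T}) (Es : {set {set T}}) : Prop :=
  ~ colorable Vs Es /\
  forall (Vs' : {set T}) (Es' : {set {set T}}),
    bihypergraph Vs' Es' -> Vs' \subset Vs -> Es' \subset Es ->
    (Vs', Es') <> (Vs, Es) -> colorable Vs' Es'.

End BiHypergraph.

(* Vertex type for H_n plus an extra vertex v = None;
   Some (i, j) stands for v_{i+1, j+1} (0-based indices). *)
Definition HV (n : nat) : finType := option ('I_n * 'I_3)%type.

Definition Hedge (n : nat) (e : {set HV n}) : bool :=
  [exists i : 'I_n, e == [set (Some (i, j) : HV n) | j : 'I_3]]
  || [exists q : 'I_n, exists q1 : 'I_n, exists j : 'I_3, exists j' : 'I_3,
        [&& (q1 == q.+1 :> nat),
            (j' == (j + 1) %% 3 :> nat) || (j' == (j + 2) %% 3 :> nat) &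
            e == [set (Some (q1, j) : HV n); Some (q, j); Some (q, j')]]].

Definition ext_edge (n : nat) (e : {set HV n}) : bool :=
  [exists f : 'I_n, exists l : 'I_n, exists j : 'I_3, exists j' : 'I_3,
     [&& (f == 0 :> nat), (l == n.-1 :> nat), (j' == (j + 1) %% 3 :> nat) &
         e == [set (None : HV n); Some (f, j); Some (l, j')]]].

Definition Hext_edges (n : nat) : {set {set HV n}} :=
  [set e | Hedge e || ext_edge e].

(* Main.v *)
Require Import Defs.
From mathcomp Require Import all_boot.
Set Implicit Arguments. Unset Strict Implicit. Unset Printing Implicit Defensive.


Definition good3 (a b c : nat) := size (undup [:: a; b; c]) == 2.

Lemma good3E a b c : good3 a b c = ((a==b)||(b==c)||(a==c)) && ~~((a==b)&&(b==c)).
Proof.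
rewrite /good3 /= !inE.
case: (eqVneq a b) => [<-|ab]; case: (eqVneq a c) => [<-|ac]; rewrite ?eqxx //=;
 case: (eqVneq b a) => //; case: (eqVneq b c) => //.
all: by move=> *; subst; rewrite eqxx in ab.
Qed.

Lemma ncolors3 (T : finType) (f : T -> nat) x y z : x != y -> x != z -> y != z ->
  (1 < ncolors f [set x; y; z] < #|[set x; y; z]|) = good3 (f x) (f y) (f z).
Proof.
move=> xy xz yz.
have pe : perm_eq (enum [set x; y; z]) [:: x; y; z].
  apply: uniq_perm; first exact: enum_uniq.
    by rewrite /= !inE negb_or xy xz yz.
  by move=> u; rewrite mem_enum !inE ?orbA.
have c3 : #|[set x; y; z]| = 3.
  by rewrite cardE (perm_size pe).
rewrite c3 /ncolors /good3.
have -> : size (undup [seq f x0 | x0 <- enum [set x; y; z]]) = size (undup [:: f x; f y; f z]).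
  apply: perm_size; apply: perm_undup; apply: perm_mem.
  exact: (perm_map f pe).
by case: (size _) => [|[|[|[]]]].
Qed.

Definition o0 : 'I_3 := @Ordinal 3 0 isT.
Definition o1 : 'I_3 := @Ordinal 3 1 isT.
Definition o2 : 'I_3 := @Ordinal 3 2 isT.

Lemma ord3E (x : 'I_3) : [\/ x = o0, x = o1 | x = o2].
Proof.
case: x => -[|[|[|//]]] H.
- by constructor 1; apply: val_inj.
- by constructor 2; apply: val_inj.
- by constructor 3; apply: val_inj.
Qed.

Ltac ord3 x := case: (ord3E x) => ->.

Definition std (a b : nat) (P : 'I_3) (r : nat) (x : 'I_3) : nat :=
  if (x == P) (+) odd r then b else a.

Lemma good3_ab a b (b1 b2 b3 : bool) : a != b ->
  good3 (if b1 then b else a) (if b2 then b else a) (if b3 then b else a)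
  = ~~ ((b1 == b2) && (b2 == b3)).
Proof.
move=> ab; rewrite good3E.
by case: b1; case: b2; case: b3; rewrite ?eqxx //= ?(negbTE ab) ?(eq_sym b a) ?(negbTE ab).
Qed.

Lemma std_tri a b P r : a != b -> good3 (std a b P r o0) (std a b P r o1) (std a b P r o2).
Proof.
move=> ab; rewrite /std good3_ab //.
by case: (odd r); ord3 P.
Qed.

Lemma std_trans a b P r j j' : a != b -> j != j' ->
  good3 (std a b P r.+1 j) (std a b P r j) (std a b P r j').
Proof.
move=> ab; rewrite /std good3_ab //= .
by case: (odd r); ord3 P; ord3 j; ord3 j'.
Qed.




Section G.
Variable n : nat.

Definition colf (g : nat -> 'I_3 -> nat) (w : nat) (u : HV n) : nat :=
  match u with Some (r, x) => g (val r) x | None => w end.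

Lemma triset (r : 'I_n) :
  [set (Some (r, j) : HV n) | j : 'I_3] = [set Some (r, o0); Some (r, o1); Some (r, o2)].
Proof.
apply/setP => u; rewrite !inE; apply/imsetP/idP.
  by case=> j _ ->; ord3 j; rewrite eqxx ?orbT.
by case/orP => [/orP [] |] /eqP ->; eexists.
Qed.

Lemma jneq (j j' : 'I_3) : j != j' -> (val j' == (j + 1) %% 3) || (val j' == (j + 2) %% 3).
Proof. by ord3 j; ord3 j'. Qed.

Lemma jneq' (j j' : 'I_3) : (val j' == (j + 1) %% 3) || (val j' == (j + 2) %% 3) -> j != j'.
Proof. by ord3 j; ord3 j'. Qed.

Lemma reduce (g : nat -> 'I_3 -> nat) w (e0 : {set HV n}) :
 (forall r : 'I_n, [set (Some (r, j) : HV n) | j : 'I_3] != e0 ->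
     good3 (g r o0) (g r o1) (g r o2)) ->
 (forall (q q1 : 'I_n) (j j' : 'I_3), q1 = q.+1 :> nat -> j != j' ->
     [set (Some (q1, j) : HV n); Some (q, j); Some (q, j')] != e0 ->
     good3 (g q1 j) (g q j) (g q j')) ->
 (forall (f l : 'I_n) (j j' : 'I_3), f = 0 :> nat -> l = n.-1 :> nat ->
     j' = (j + 1) %% 3 :> nat ->
     [set (None : HV n); Some (f, j); Some (l, j')] != e0 ->
     good3 w (g f j) (g l j')) ->
 proper_coloring (Hext_edges n :\ e0) (colf g w).
Proof.
move=> Ct Ci Ce e; rewrite !inE => /andP [ne0].
case/orP => [/orP [/existsP [i /eqP ee] |
   /existsP [q /existsP [q1 /existsP [j /existsP [j' /and3P [/eqP hq hj /eqP ee]]]]]] |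
   /existsP [f /existsP [l /existsP [j /existsP [j' /and4P [/eqP hf /eqP hl /eqP hj /eqP ee]]]]]].
- rewrite ee triset ncolors3; first by apply: Ct; rewrite -ee.
  + by apply/eqP => -[].
  + by apply/eqP => -[].
  + by apply/eqP => -[].
- have jj := jneq' hj.
  rewrite ee ncolors3; first by apply: Ci => //; rewrite -ee.
  + by apply/eqP => -[] /(congr1 val) /=; rewrite hq => /eqP; rewrite (gtn_eqF (ltnSn _)).
  + by apply/eqP => -[] /(congr1 val) /=; rewrite hq => /eqP; rewrite (gtn_eqF (ltnSn _)).
  + by apply/eqP => -[] /eqP; apply/negP.
- rewrite ee ncolors3; first by apply: Ce => //; rewrite -ee.
  + by [].
  + by [].
  + by apply/eqP => -[] _ ejj; move: hj; rewrite ejj; ord3 j'.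
Qed.
End G.




Section G.
Variable n : nat.

Lemma tri_in (r : 'I_n) : [set (Some (r, o0) : HV n); Some (r, o1); Some (r, o2)] \in Hext_edges n.
Proof.
by rewrite inE -triset; apply/orP; left; apply/orP; left; apply/existsP; exists r.
Qed.

Lemma int_in (q q1 : 'I_n) (j j' : 'I_3) : q1 = q.+1 :> nat -> j != j' ->
  [set (Some (q1, j) : HV n); Some (q, j); Some (q, j')] \in Hext_edges n.
Proof.
move=> hq jj; rewrite inE; apply/orP; left; apply/orP; right.
apply/existsP; exists q; apply/existsP; exists q1; apply/existsP; exists j;
apply/existsP; exists j'.
by apply/and3P; split; [apply/eqP; exact: hq | exact: jneq | ].
Qed.

Lemma ext_in (f l : 'I_n) (j j' : 'I_3) : f = 0 :> nat -> l = n.-1 :> nat ->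
  j' = (j + 1) %% 3 :> nat ->
  [set (None : HV n); Some (f, j); Some (l, j')] \in Hext_edges n.
Proof.
move=> hf hl hj; rewrite inE; apply/orP; right.
apply/existsP; exists f; apply/existsP; exists l; apply/existsP; exists j;
apply/existsP; exists j'.
by apply/and4P; split => //; apply/eqP.
Qed.

Lemma proper_good (f : HV n -> nat) Es x y z : proper_coloring Es f ->
  [set x; y; z] \in Es -> x != y -> x != z -> y != z -> good3 (f x) (f y) (f z).
Proof. by move=> pf he xy xz yz; rewrite -ncolors3 //; apply: pf. Qed.

End G.

Definition pat (p : 'I_3) (A B : nat) (x : 'I_3) := if x == p then B else A.

Lemma g3AA x A : good3 x A A = (x != A).
Proof. by rewrite good3E eqxx; case: (x == A). Qed.
Lemma g3AxA x A : good3 A x A = (x != A).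
Proof. by rewrite good3E eqxx eq_sym; case: (x == A). Qed.
Lemma g3AAx x A : good3 A A x = (x != A).
Proof. by rewrite good3E eqxx eq_sym; case: (x == A). Qed.
Lemma g3AB x A B : A != B -> good3 x A B -> (x == A) || (x == B).
Proof.
rewrite good3E => AB /andP [] /orP [/orP [-> //| ] | ->]; rewrite ?orbT //.
by rewrite (negbTE AB).
Qed.

Lemma pattern (h : 'I_3 -> nat) : good3 (h o0) (h o1) (h o2) ->
  exists p A B, A != B /\ forall x, h x = pat p A B x.
Proof.
rewrite good3E.
case: (eqVneq (h o0) (h o1)) => e01; case: (eqVneq (h o1) (h o2)) => e12;
  case: (eqVneq (h o0) (h o2)) => e02 //= _.
- by move: e12; rewrite -e01 e02 eqxx.
- exists o2, (h o0), (h o2); split => // x; rewrite /pat; ord3 x => //.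
- by move: e01; rewrite e02 -e12 eqxx.
- exists o0, (h o1), (h o0); split; first by rewrite eq_sym.
  move=> x; rewrite /pat; ord3 x => //; by rewrite -e12.
- exists o1, (h o0), (h o1); split; first by [].
  move=> x; rewrite /pat; ord3 x => //.
Qed.

Lemma trans p A B (h h' : 'I_3 -> nat) : A != B -> (forall x, h x = pat p A B x) ->
  good3 (h' o0) (h' o1) (h' o2) -> (forall j j', j != j' -> good3 (h' j) (h j) (h j')) ->
  forall x, h' x = pat p B A x.
Proof.
move=> AB hh ht he.
have hB : forall x, x != p -> h' x = B.
  move=> x xp.
  have [y [yx yp]] : exists y, y != x /\ y != p by move: xp; ord3 x; ord3 p => // _;
     first [by exists o0 | by exists o1 | by exists o2].
  have := he x y; rewrite eq_sym yx !hh /pat (negbTE xp) (negbTE yp) g3AA => /(_ isT) nA.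
  have := he x p xp; rewrite !hh /pat (negbTE xp) eqxx => /(g3AB AB).
  by rewrite (negbTE nA) => /eqP.
have hpB : h' p != B.
  move: ht hB; ord3 p => ht hB.
  - by move: ht; rewrite (hB o1) // (hB o2) // g3AA.
  - by move: ht; rewrite (hB o0) // (hB o2) // g3AxA.
  - by move: ht; rewrite (hB o0) // (hB o1) // g3AAx.
have [y yp] : exists y, y != p by ord3 p; first [by exists o0 | by exists o1].
have := he p y; rewrite eq_sym yp !hh /pat eqxx (negbTE yp) => /(_ isT).
rewrite eq_sym in AB => /(g3AB AB); rewrite (negbTE hpB) /= => /eqP hpA.
move=> x; rewrite /pat; case: eqP => [->|/eqP]; first by [].
exact: hB.
Qed.




Lemma some_neq n (r r' : 'I_n) (x x' : 'I_3) : (r != r') || (x != x') ->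
  (Some (r, x) : HV n) != Some (r', x').
Proof. by case/orP => /eqP ne; apply/eqP => -[]. Qed.

Lemma uncol n (f : HV n -> nat) : 1 < n -> ~~ odd n -> ~ proper_coloring (Hext_edges n) f.
Proof.
move=> n1 ev pf.
pose h (r : 'I_n) x := f (Some (r, x)).
have n0 : 0 < n by exact: ltnW.
pose r0 : 'I_n := Ordinal n0.
have [p [A [B [AB hp]]]] : exists p A B, A != B /\ forall x, h r0 x = pat p A B x.
  apply: pattern; apply: (proper_good pf (tri_in r0));
  by apply: some_neq; rewrite eqxx.
have ind : forall m (r : 'I_n), val r = m ->
    forall x, h r x = pat p (if odd m then B else A) (if odd m then A else B) x.
  elim=> [|m IH] r hr.
    by have -> : r = r0 by apply: val_inj.
  have mr : m < n by move: (ltn_ord r); rewrite hr => /ltnW.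
  pose r' : 'I_n := Ordinal mr.
  have := IH r' erefl.
  have ht : good3 (h r o0) (h r o1) (h r o2).
    by apply: (proper_good pf (tri_in r)); apply: some_neq; rewrite eqxx.
  have he : forall j j', j != j' -> good3 (h r j) (h r' j) (h r' j').
    move=> j j' jj; apply: (proper_good pf (@int_in n r' r j j' hr jj)); apply: some_neq.
    + by apply/orP; left; apply/eqP => /(congr1 val) /=; rewrite hr => /eqP; rewrite (gtn_eqF (ltnSn _)).
    + by apply/orP; left; apply/eqP => /(congr1 val) /=; rewrite hr => /eqP; rewrite (gtn_eqF (ltnSn _)).
    + by rewrite jj orbT.
  rewrite /=; case: (odd m) => /= hh.
  - by apply: (trans _ hh ht he); rewrite eq_sym.
  - exact: (trans AB hh ht he).
have nl : n.-1 < n by rewrite prednK // ltnSn.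
pose rl : 'I_n := Ordinal nl.
have hl := ind n.-1 rl erefl.
have ol : odd n.-1 by move: ev; rewrite -{1}(prednK n0) /= negbK.
rewrite ol in hl.
have h0 := ind 0 r0 erefl; rewrite /= in h0.
have ext : forall j j' : 'I_3, j' = (j + 1) %% 3 :> nat -> good3 (f None) (h r0 j) (h rl j').
  move=> j j' hj; apply: (proper_good pf (@ext_in n r0 rl j j' erefl erefl hj)) => //.
  apply: some_neq; apply/orP; right; apply/eqP => ejj; move: hj; rewrite ejj; by ord3 j'.
move: ext h0 hl; ord3 p => ext h0 hl.
- have := ext o0 o1 erefl; have := ext o2 o0 erefl; have := ext o1 o2 erefl.
  rewrite !h0 !hl /pat /= => eAB eA eB.
  move/(g3AB AB): eAB; rewrite g3AA in eA; rewrite g3AA in eB.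
  by rewrite (negbTE eA) (negbTE eB).
- have := ext o1 o2 erefl; have := ext o0 o1 erefl; have := ext o2 o0 erefl.
  rewrite !h0 !hl /pat /= => eAB eA eB.
  move/(g3AB AB): eAB; rewrite g3AA in eA; rewrite g3AA in eB.
  by rewrite (negbTE eA) (negbTE eB).
- have := ext o2 o0 erefl; have := ext o1 o2 erefl; have := ext o0 o1 erefl.
  rewrite !h0 !hl /pat /= => eAB eA eB.
  move/(g3AB AB): eAB; rewrite g3AA in eA; rewrite g3AA in eB.
  by rewrite (negbTE eA) (negbTE eB).
Qed.




Section Cases.
Variable n : nat.
Hypothesis n1 : 1 < n.
Hypothesis ev : ~~ odd n.

Lemma n0 : 0 < n. Proof. exact: ltnW. Qed.
Lemma ol : odd n.-1. Proof. by move: ev; rewrite -{1}(prednK n0) /= negbK. Qed.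

Lemma caseE (f0 l0 : 'I_n) (j0 j0' : 'I_3) : f0 = 0 :> nat -> l0 = n.-1 :> nat ->
  j0' = (j0 + 1) %% 3 :> nat ->
  exists g w, proper_coloring (Hext_edges n :\ [set (None : HV n); Some (f0, j0); Some (l0, j0')]) (colf g w).
Proof.
move=> hf0 hl0 hj0.
exists (fun r x => std 0 1 j0 r x), 1; apply: reduce.
- by move=> r _; apply: std_tri.
- by move=> q q1 j j' hq jj _; rewrite hq; apply: std_trans.
- move=> f l j j' hf hl hj ne.
  case: (eqVneq j j0) => [ej|nj].
    have ef : f = f0 by apply: ord_inj; rewrite hf hf0.
    have el : l = l0 by apply: ord_inj; rewrite hl hl0.
    have ej' : j' = j0' by apply: ord_inj; rewrite hj hj0 ej.
    by rewrite ef el ej ej' eqxx in ne.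
  rewrite hf hl /std ol.
  move/eqP: hj; move: nj; ord3 j0; ord3 j; ord3 j' => //.
Qed.
End Cases.




Section Cases.
Variable n : nat.
Hypothesis n1 : 1 < n.
Hypothesis ev : ~~ odd n.

Definition gT (i : nat) (r : nat) (x : 'I_3) : nat :=
  if r < i then std 0 1 o0 r x else if r == i then nat_of_bool (odd i)
  else std (if odd i then 0 else 2) (if odd i then 2 else 1) o1 r x.

Lemma caseT (i : 'I_n) :
  exists g w, proper_coloring (Hext_edges n :\ [set (Some (i, j) : HV n) | j : 'I_3]) (colf g w).
Proof.
have cd : (if odd i then 0 else 2) != (if odd i then 2 else 1) by case: (odd i).
exists (gT i), (if i == 0 :> nat then nat_of_bool (odd i) else nat_of_bool (~~ odd i)); apply: reduce.
- move=> r ne; rewrite /gT.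
  case: (ltngtP r i) => hr.
  + exact: std_tri.
  + exact: std_tri.
  + have er : r = i by apply: ord_inj.
    by rewrite er eqxx in ne.
- move=> q q1 j j' hq jj _; rewrite /gT hq.
  case: (ltngtP q.+1 i) => h1.
  + exact: std_trans.
  + case: eqP => [eq|_]; last exact: std_trans.
    rewrite eq /std /=.
    by move: jj; case: (odd i); ord3 j; ord3 j'.
  + rewrite -h1 /std /=.
    by move: jj; case: (odd q); ord3 j; ord3 j'.
- move=> f l j j' hf hl hj _; rewrite /gT hf hl.
  have hil : i <= n.-1 by rewrite -ltnS (ltn_predK (ltn_ord i)).
  move/eqP: hj.
  case: (posnP i) => [i0|ip].
  + have nl : n.-1 != 0 by rewrite -lt0n -ltnS (ltn_predK n1).
    rewrite i0 /= => hj; rewrite ifN_eq //; move: hj.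
    rewrite /std (ol n1 ev) /=.
    by ord3 j; ord3 j'.
  + rewrite ltnNge hil /=.
    case: (ltngtP i n.-1) hil => // h3 _.
    * rewrite /std (ol n1 ev) /=.
      by case: (odd i); ord3 j; ord3 j'.
    * rewrite h3 (ol n1 ev) /std /=.
      by ord3 j; ord3 j'.
Qed.
End Cases.




Definition third (a b : 'I_3) : 'I_3 :=
  if (a != o0) && (b != o0) then o0 else if (a != o1) && (b != o1) then o1 else o2.

Section Cases.
Variable n : nat.
Hypothesis n1 : 1 < n.
Hypothesis ev : ~~ odd n.

Definition gI (q : nat) (j0 j0' : 'I_3) (r : nat) (x : 'I_3) : nat :=
  let t := (val j0' == (j0 + 1) %% 3) in
  if r <= q then std 0 1 (third j0 j0') r x
  else std 0 1 (if t then j0 else j0') (r + ~~ t) x.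

Lemma caseI (q0 q1' : 'I_n) (j0 j0' : 'I_3) : q1' = q0.+1 :> nat -> j0 != j0' ->
  exists g w, proper_coloring (Hext_edges n :\
    [set (Some (q1', j0) : HV n); Some (q0, j0); Some (q0, j0')]) (colf g w).
Proof.
move=> hq0 hj0.
exists (gI q0 j0 j0'), (if val j0' == (j0 + 1) %% 3 then 1 else 2); apply: reduce.
- move=> r _; rewrite /gI; case: ifP => _; exact: std_tri.
- move=> q q1 j j' hq jj ne; rewrite /gI hq.
  case: (ltngtP q q0) => h1.
  + exact: std_trans.
  + rewrite addSn; exact: std_trans.
  + rewrite /std oddS oddD.
    have eq : q = q0 by apply: ord_inj.
    have eq1 : q1 = q1' by apply: ord_inj; rewrite hq hq0 h1.
    have nj : ~~ ((j == j0) && (j' == j0')).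
      apply/negP => /andP [/eqP e1 /eqP e2]; move: ne.
      by rewrite eq eq1 e1 e2 eqxx.
    move: nj jj hj0; case: (odd q); ord3 j0; ord3 j0'; ord3 j; ord3 j' => //.
- move=> f l j j' hf hl hj _; rewrite /gI hf hl.
  have hl0 : q0 < n.-1 by rewrite -hq0 -ltnS (ltn_predK (ltn_ord q1')) ltn_ord.
  rewrite leq0n leqNgt hl0 /= /std oddD (ol n1 ev).
  move/eqP: hj hj0; ord3 j0; ord3 j0'; ord3 j; ord3 j' => //.
Qed.
End Cases.




Theorem mainTheorem17 (k : nat) (hk : 1 <= k) :
  minimal_uncolorable [set: HV (2 * k)] (Hext_edges (2 * k)).
Proof.
have n1 : 1 < 2 * k by case: k hk => // m _; rewrite mulnS ltn_addr.
set n := 2 * k.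
have ev : ~~ odd n by rewrite /n oddM.
split.
  by case=> f pf; apply: (uncol n1 ev pf).
move=> Vs' Es' [hsub _] _ hEs hne.
case: (eqVneq Es' (Hext_edges n)) => [eE | nE].
  exfalso; apply: hne; rewrite eE in hsub *; congr pair => //.
  apply/setP => u; rewrite inE; case: u => [[r x]|].
    have := hsub _ (tri_in r) => /subsetP; apply.
    by rewrite !inE; ord3 x; rewrite eqxx ?orbT.
  have nl : n.-1 < n by rewrite (ltn_predK n1).
  have h := @ext_in n (Ordinal (n0 n1)) (Ordinal nl) o0 o1 erefl erefl erefl.
  have := hsub _ h => /subsetP; apply.
  by rewrite !inE eqxx.
have : Es' \proper Hext_edges n by rewrite properEneq nE.
case/properP => _ [e0 he0 ne0].
suff [g [w pc]] : exists g w, proper_coloring (Hext_edges n :\ e0) (colf g w).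
  exists (colf g w) => e he; apply: pc.
  rewrite in_setD1 (subsetP hEs _ he) andbT.
  by apply/eqP => ee; rewrite -ee he in ne0.
move: he0; rewrite inE.
case/orP => [/orP [/existsP [i /eqP ->] |
   /existsP [q /existsP [q1 /existsP [j /existsP [j' /and3P [/eqP hq hj /eqP ->]]]]]] |
   /existsP [f /existsP [l /existsP [j /existsP [j' /and4P [/eqP hf /eqP hl /eqP hj /eqP ->]]]]]].
- exact: caseT.
- exact: (caseI n1 ev hq (jneq' hj)).
- exact: (caseE n1 ev hf hl hj).
Qed.
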